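(* Let $x\in S_N$. Then $x$ contains a $[231]$-pattern if and only if $x$ has an unmatched ascent. Likewise, $x$ contains a $[312]$-pattern if and only if $x$ has an unmatched descent.
   Context: $S_N$ is generated by $s_1,\dots,s_{N-1}$; permutations are in one-line notation and composed as functions, $(uv)(j)=u(v(j))$, so $xs_i$ swaps the entries in positions $i,i+1$. $\operatorname{len}$ denotes Coxeter length (number of inversions). $y$ has a right descent at $i$ if $\operatorname{len}(ys_i)<\operatorname{len}(y)$, and $z$ has a left descent at $i$ if $\operatorname{len}(s_iz)<\operatorname{len}(z)$. $x$ has an unmatched ascent if there exist $i$ and $y,z\in S_N$ with $x=y\,s_is_{i+1}\,z$, $\operatorname{len}(x)=\operatorname{len}(y)+2+\operatorname{len}(z)$, $y$ has no right descents in $\{i,i+1\}$ and $z$ has no left descents in $\{i,i+1\}$. An unmatched descent is defined identically with $s_is_{i+1}$ replaced by $s_{i+1}s_i$. $x$ contains a pattern $\sigma\in S_3$ if some subsequence $x(a),x(b),x(c)$, $a<b<c$, is in the same relative order as $\sigma$. *)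

(* Defs.v *)
(* Permutations of S_N are elements of 'S_N = {perm 'I_N};
   positions and values are 0-indexed ('I_N = {0,...,N-1}). *)
From mathcomp Require Import all_boot all_order all_fingroup.
Set Implicit Arguments. Unset Strict Implicit. Unset Printing Implicit Defensive.

Section Defs.
Variable N : nat.

(* Composition as functions, as in the paper: (pcomp u v) j = u (v j).
   Note MathComp's group product satisfies (v * u)%g j = u (v j) (permM). *)
Definition pcomp (u v : 'S_N) : 'S_N := (v * u)%g.

(* Coxeter length = number of inversions. *)
Definition len (x : 'S_N) : nat :=
  #|[set p : 'I_N * 'I_N | (p.1 < p.2) && (x p.2 < x p.1)]|.

(* Simple transposition s_i swapping positions i and i+1 (0-indexed);
   the identity if i+1 is out of range (never used in that case). *)
Definition sgen (i : nat) : 'S_N :=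
  match insub i, insub i.+1 with
  | Some a, Some b => tperm a b
  | _, _ => 1%g
  end.

Definition right_descent (y : 'S_N) (i : nat) : bool :=
  len (pcomp y (sgen i)) < len y.

Definition left_descent (z : 'S_N) (i : nat) : bool :=
  len (pcomp (sgen i) z) < len z.

Definition unmatched_ascent (x : 'S_N) : Prop :=
  exists (i : nat) (y z : 'S_N),
    [/\ i.+2 < N,
        x = pcomp y (pcomp (pcomp (sgen i) (sgen i.+1)) z),
        len x = len y + 2 + len z,
        ~~ right_descent y i /\ ~~ right_descent y i.+1 &
        ~~ left_descent z i /\ ~~ left_descent z i.+1].

Definition unmatched_descent (x : 'S_N) : Prop :=
  exists (i : nat) (y z : 'S_N),
    [/\ i.+2 < N,
        x = pcomp y (pcomp (pcomp (sgen i.+1) (sgen i)) z),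
        len x = len y + 2 + len z,
        ~~ right_descent y i /\ ~~ right_descent y i.+1 &
        ~~ left_descent z i /\ ~~ left_descent z i.+1].

(* x contains the pattern sigma (a permutation of S_3 in one-line notation,
   given as the list [:: sigma 1; sigma 2; sigma 3]) if some subsequence
   x(a), x(b), x(c) with a < b < c is in the same relative order as sigma. *)
Definition contains_pattern (x : 'S_N) (sigma : seq nat) : Prop :=
  exists a b c : 'I_N,
    [/\ a < b, b < c &
        let t := [:: a; b; c] in
        forall p q : nat, p < 3 -> q < 3 ->
          (x (nth a t p) < x (nth a t q)) = (nth 0 sigma p < nth 0 sigma q)].

End Defs.

(* Main.v *)
Require Import Defs.
From mathcomp Require Import all_boot all_order all_fingroup zify.
Set Implicit Arguments. Unset Strict Implicit. Unset Printing Implicit Defensive.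

Section S.
Variable N : nat.
Implicit Types x y u z : 'S_N.

Definition iset (s : 'S_N) := [set p : 'I_N * 'I_N | (p.1 < p.2) && (s p.2 < s p.1)].

Lemma pcE (u v : 'S_N) (j : 'I_N) : (Defs.pcomp u v) j = u (v j).
Proof. by rewrite /Defs.pcomp permM. Qed.

Lemma lenA y u :
  (forall p q : 'I_N, p < q -> u q < u p -> y (u q) < y (u p)) ->
  len (Defs.pcomp y u) = len y + len u.
Proof.
move=> H.
rewrite /len -(cardsID [set pq : 'I_N * 'I_N | u pq.2 < u pq.1]).
rewrite addnC; congr (_ + _).
  pose f := fun pq : 'I_N * 'I_N => (u pq.1, u pq.2).
  have finj : injective f.
    by move=> [p q] [p' q'] [] /perm_inj -> /perm_inj ->.
  rewrite /len -[#|[set p | _ & y _ < y _]|](card_preimset _ finj); apply: eq_card => -[p q].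
  rewrite !inE /= !pcE.
  have Hpq := H p q; have Hqp := H q p.
  case: (ltngtP p q) => [hpq|hqp|/val_inj e]; last by subst q; rewrite !ltnn.
  - case: (ltngtP (u p) (u q)) => [upq|uqp|/val_inj e]; last by rewrite (perm_inj e) ltnn.
    + lia.
    + lia.
  - case: (ltngtP (u p) (u q)) => [upq|uqp|/val_inj e]; last by rewrite (perm_inj e) ltnn.
    + lia.
    + lia.
apply: eq_card => -[p q]; rewrite !inE /= !pcE.
case pq: (p < q) => //=.
case uqp: (u q < u p) => /=.
  by rewrite H.
by rewrite andbF.
Qed.

Lemma sgen_val i (j : 'I_N) : i.+1 < N ->
  val (sgen N i j) = if val j == i then i.+1 else if val j == i.+1 then i else val j.
Proof.
move=> hi; have hi0 : i < N by lia.
rewrite /sgen (insubT (fun k => k < N) hi0) (insubT (fun k => k < N) hi).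
case: tpermP => [->|->|/eqP n1 /eqP n2] /=.
- by rewrite eqxx.
- by rewrite ifN ?eqxx //; lia.
- by rewrite -!val_eqE /= in n1 n2; rewrite (negbTE n1) (negbTE n2).
Qed.

Lemma iset_sgen i (P Q : 'I_N) : val P = i -> val Q = i.+1 ->
  iset (sgen N i) = [set (P, Q)].
Proof.
move=> hP hQ; have hi : i.+1 < N by rewrite -hQ; exact: ltn_ord.
apply/setP => -[p q]; rewrite !inE /= !sgen_val // xpair_eqE -!val_eqE hP hQ /=.
by repeat case: ifP => ?; lia.
Qed.

Lemma len_sgen i : i.+1 < N -> len (sgen N i) = 1.
Proof.
move=> hi; have hi0 : i < N by lia.
by rewrite /len -/(iset _) (@iset_sgen i (Ordinal hi0) (Ordinal hi)) // cards1.
Qed.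

Lemma len_inv x : len x^-1%g = len x.
Proof.
pose f := fun pq : 'I_N * 'I_N => (x^-1%g pq.2, x^-1%g pq.1).
have finj : injective f by move=> [p q] [p' q'] [] /perm_inj -> /perm_inj ->.
rewrite /len -[#|[set p | _ & x _ < x _]|](card_preimset _ finj); apply: eq_card => -[p q].
by rewrite !inE /= !permKV andbC.
Qed.

Lemma sgen_invol i : (sgen N i * sgen N i)%g = 1%g.
Proof.
rewrite /sgen; case: insub => [a|]; last by rewrite mulg1.
case: insub => [b|]; last by rewrite mulg1.
exact: tperm2.
Qed.

Lemma sgenV i : (sgen N i)^-1%g = sgen N i.
Proof.
rewrite /sgen; case: insub => [a|]; last by rewrite invg1.
case: insub => [b|]; last by rewrite invg1.
exact: tpermV.
Qed.

Lemma sgenPQ i (P Q : 'I_N) : val P = i -> val Q = i.+1 ->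
  sgen N i P = Q /\ sgen N i Q = P.
Proof.
move=> hP hQ; have hi : i.+1 < N by rewrite -hQ; exact: ltn_ord.
split; apply/val_inj; rewrite sgen_val // hP hQ eqxx //.
by rewrite ifN //; lia.
Qed.

Lemma rdesc y i (P Q : 'I_N) : val P = i -> val Q = i.+1 ->
  (~~ right_descent y i) = (y P < y Q).
Proof.
move=> hP hQ; have hi : i.+1 < N by rewrite -hQ; exact: ltn_ord.
have [sP sQ] := sgenPQ hP hQ.
have hs : forall p q : 'I_N, p < q -> sgen N i q < sgen N i p -> p = P /\ q = Q.
  move=> p q h1 h2.
  have : (p, q) \in iset (sgen N i) by rewrite inE /= h1 h2.
  by rewrite (iset_sgen hP hQ) inE => /eqP [-> ->].
rewrite /right_descent.
case: (ltngtP (y P) (y Q)) => [h|h|e].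
- rewrite lenA; first by lia.
  by move=> p q h1 h2; have [-> ->] := hs p q h1 h2; rewrite sP sQ.
- set y' := Defs.pcomp y (sgen N i).
  have ey : y = Defs.pcomp y' (sgen N i).
    by rewrite /y' /Defs.pcomp mulgA sgen_invol mul1g.
  have hl : len y = len y' + len (sgen N i).
    rewrite {1}ey lenA // => p q h1 h2; have [-> ->] := hs p q h1 h2.
    by rewrite /y' !pcE sQ sP sQ.
  rewrite hl len_sgen //; lia.
- by move: (perm_inj (val_inj e)) => /(congr1 val); rewrite hP hQ; lia.
Qed.

Lemma ldesc_inv z i : left_descent z i = right_descent z^-1%g i.
Proof.
rewrite /left_descent /right_descent -(len_inv z) -(len_inv (Defs.pcomp _ z)).
by rewrite /Defs.pcomp invMg sgenV.
Qed.

Lemma ldesc z i (P Q : 'I_N) : val P = i -> val Q = i.+1 ->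
  (~~ left_descent z i) = (z^-1%g P < z^-1%g Q).
Proof. by move=> hP hQ; rewrite ldesc_inv (rdesc _ hP hQ). Qed.

Lemma Wval i (j : 'I_N) : i.+2 < N ->
  val (Defs.pcomp (sgen N i) (sgen N i.+1) j) =
  if val j == i then i.+1 else if val j == i.+1 then i.+2 else if val j == i.+2 then i else val j.
Proof.
move=> hi; rewrite pcE sgen_val; last by lia.
rewrite sgen_val //; have -> : val j = nat_of_ord j by []. move: (nat_of_ord j) => v.
case: (v =P i) => ?; case: (v =P i.+1) => ?; case: (v =P i.+2) => ? /=. all: try (repeat case: ifP => ?; lia).
Qed.

Lemma W'val i (j : 'I_N) : i.+2 < N ->
  val (Defs.pcomp (sgen N i.+1) (sgen N i) j) =
  if val j == i then i.+2 else if val j == i.+1 then i else if val j == i.+2 then i.+1 else val j.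
Proof.
move=> hi; rewrite pcE sgen_val //.
rewrite sgen_val; last by lia. have -> : val j = nat_of_ord j by []. move: (nat_of_ord j) => v.
case: (v =P i) => ?; case: (v =P i.+1) => ?; case: (v =P i.+2) => ? /=. all: try (repeat case: ifP => ?; lia).
Qed.

Lemma pat231 x : contains_pattern x [:: 2; 3; 1] <->
  exists a b c : 'I_N, [/\ a < b, b < c, x c < x a & x a < x b].
Proof.
split.
  move=> [a [b [c [hab hbc H]]]]; exists a, b, c; split => //.
  - by have := H 2 0 isT isT.
  - by have := H 0 1 isT isT.
move=> [a [b [c [hab hbc h1 h2]]]]; exists a, b, c; split => //.
move=> t [|[|[|p]]] [|[|[|q]]] //= _ _; lia.
Qed.

Lemma pat312 x : contains_pattern x [:: 3; 1; 2] <->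
  exists a b c : 'I_N, [/\ a < b, b < c, x b < x c & x c < x a].
Proof.
split.
  move=> [a [b [c [hab hbc H]]]]; exists a, b, c; split => //.
  - by have := H 1 2 isT isT.
  - by have := H 2 0 isT isT.
move=> [a [b [c [hab hbc h1 h2]]]]; exists a, b, c; split => //.
move=> t [|[|[|p]]] [|[|[|q]]] //= _ _; lia.
Qed.

Lemma ua_231 x : unmatched_ascent x -> contains_pattern x [:: 2; 3; 1].
Proof.
move=> [i [y [z [hi ex _ [ry1 ry2] [lz1 lz2]]]]].
have hP : i < N by lia. have hQ : i.+1 < N by lia.
pose P := Ordinal hP; pose Q := Ordinal hQ; pose R := Ordinal hi.
rewrite (rdesc _ (erefl : val P = i) (erefl : val Q = i.+1)) in ry1.
rewrite (rdesc _ (erefl : val Q = i.+1) (erefl : val R = i.+2)) in ry2.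
rewrite (ldesc _ (erefl : val P = i) (erefl : val Q = i.+1)) in lz1.
rewrite (ldesc _ (erefl : val Q = i.+1) (erefl : val R = i.+2)) in lz2.
have WP : sgen N i (sgen N i.+1 P) = Q.
  by apply/val_inj; have := Wval P hi; rewrite pcE => ->; rewrite /=; repeat case: ifP => ?; lia.
have WQ : sgen N i (sgen N i.+1 Q) = R.
  by apply/val_inj; have := Wval Q hi; rewrite pcE => ->; rewrite /=; repeat case: ifP => ?; lia.
have WR : sgen N i (sgen N i.+1 R) = P.
  by apply/val_inj; have := Wval R hi; rewrite pcE => ->; rewrite /=; repeat case: ifP => ?; lia.
apply/pat231; exists (z^-1%g P), (z^-1%g Q), (z^-1%g R); split => //;
  by rewrite ex !pcE !permKV ?WP ?WQ ?WR.
Qed.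

Lemma ud_312 x : unmatched_descent x -> contains_pattern x [:: 3; 1; 2].
Proof.
move=> [i [y [z [hi ex _ [ry1 ry2] [lz1 lz2]]]]].
have hP : i < N by lia. have hQ : i.+1 < N by lia.
pose P := Ordinal hP; pose Q := Ordinal hQ; pose R := Ordinal hi.
rewrite (rdesc _ (erefl : val P = i) (erefl : val Q = i.+1)) in ry1.
rewrite (rdesc _ (erefl : val Q = i.+1) (erefl : val R = i.+2)) in ry2.
rewrite (ldesc _ (erefl : val P = i) (erefl : val Q = i.+1)) in lz1.
rewrite (ldesc _ (erefl : val Q = i.+1) (erefl : val R = i.+2)) in lz2.
have WP : sgen N i.+1 (sgen N i P) = R.
  by apply/val_inj; have := W'val P hi; rewrite pcE => ->; rewrite /=; repeat case: ifP => ?; lia.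
have WQ : sgen N i.+1 (sgen N i Q) = P.
  by apply/val_inj; have := W'val Q hi; rewrite pcE => ->; rewrite /=; repeat case: ifP => ?; lia.
have WR : sgen N i.+1 (sgen N i R) = Q.
  by apply/val_inj; have := W'val R hi; rewrite pcE => ->; rewrite /=; repeat case: ifP => ?; lia.
apply/pat312; exists (z^-1%g P), (z^-1%g Q), (z^-1%g R); split => //;
  by rewrite ex !pcE !permKV ?WP ?WQ ?WR.
Qed.

Lemma ua_inv x : unmatched_ascent x -> unmatched_descent x^-1%g.
Proof.
move=> [i [y [z [hi ex hl [ry1 ry2] [lz1 lz2]]]]].
exists i, z^-1%g, y^-1%g; split => //.
- rewrite ex /Defs.pcomp !invMg !sgenV !mulgA //.
- rewrite len_inv hl !len_inv; lia.
- by rewrite -!ldesc_inv.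
- by rewrite !ldesc_inv !invgK.
Qed.

Lemma p312_inv x : contains_pattern x [:: 3; 1; 2] -> contains_pattern x^-1%g [:: 2; 3; 1].
Proof.
move=> /pat312 [a [b [c [hab hbc h1 h2]]]]; apply/pat231.
exists (x b), (x c), (x a); rewrite !permK; split => //; lia.
Qed.

Definition rk (k : 'I_N -> nat) (p : 'I_N) := #|[set q | k q < k p]|.

Lemma rk_lt k p : rk k p < N.
Proof.
rewrite /rk -[X in _ < X](card_ord N); apply: proper_card; apply/properP; split.
  by apply/subsetP.
by exists p; rewrite ?inE ?ltnn.
Qed.

Lemma rk_mono k p q : k p < k q -> rk k p < rk k q.
Proof.
move=> h; apply: proper_card; apply/properP; split.
  by apply/subsetP => r; rewrite !inE => /ltn_trans; apply.
by exists p; rewrite !inE ?ltnn.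
Qed.

Lemma rkE k (kinj : injective k) p q : (rk k p < rk k q) = (k p < k q).
Proof.
case: (ltngtP (k p) (k q)) => [h|h|e].
- exact: rk_mono.
- by apply/negbTE; rewrite -leqNgt ltnW // rk_mono.
- by rewrite (kinj _ _ e) ltnn.
Qed.

Lemma rk_inj k (kinj : injective k) : injective (fun p => Ordinal (rk_lt k p)).
Proof.
move=> p q e; have e2 : rk k p = rk k q := congr1 val e.
apply: kinj; case: (ltngtP (k p) (k q)) => // h; [have := rk_mono h | have := rk_mono h]; rewrite e2 ltnn //.
Qed.

Definition rkperm k (kinj : injective k) : 'S_N := perm (rk_inj kinj).

Lemma rkpermE k (kinj : injective k) p : val (rkperm kinj p) = rk k p.
Proof. by rewrite permE. Qed.

Lemma keylt g1 g2 r1 r2 : r1 < N -> r2 < N ->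
  (g1 * N + r1 < g2 * N + r2) = (g1 < g2) || (g1 == g2) && (r1 < r2).
Proof.
move=> h1 h2; case: (ltngtP g1 g2) => [h|h|->] /=.
- apply/idP; have : g1.+1 * N <= g2 * N by rewrite leq_mul2r h orbT.
  rewrite mulSn; lia.
- apply/negbTE; rewrite -leqNgt.
  have : g2.+1 * N <= g1 * N by rewrite leq_mul2r h orbT.
  rewrite mulSn; lia.
- by rewrite ltn_add2l.
Qed.

End S.

Section C.
Variable N : nat.
Implicit Types x y u z : 'S_N.
Lemma construct x (a b c : 'I_N) : a < b -> b < c -> x c < x a -> x a < x b ->
  (forall q : 'I_N, a < q -> x a < x q -> b <= q) -> unmatched_ascent x.
Proof.
move=> hab hbc h1 h2 hmin.
pose blk (p : 'I_N) := (p == a :> nat) || (p == b :> nat) || (p == c :> nat).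
pose g (p : 'I_N) := if p < a then 0 else if c < p then 4 else if blk p then 2
                     else if x p < x a then 1 else 3.
pose kz p := g p * N + nat_of_ord p.
pose r (p : 'I_N) := if blk p then nat_of_ord (x p) else nat_of_ord p.
pose ku p := g p * N + r p.
have rlt p : r p < N by rewrite /r; case: ifP => _; apply: ltn_ord.
have xeq p q : (x p == x q :> nat) = (p == q :> nat).
  by rewrite !val_eqE (inj_eq perm_inj).
have kzlt p q : (kz p < kz q) = (g p < g q) || (g p == g q) && (p < q).
  by rewrite /kz keylt //; apply: ltn_ord.
have kult p q : (ku p < ku q) = (g p < g q) || (g p == g q) && (r p < r q).
  by rewrite /ku keylt.
have kzinj : injective kz.
  move=> p q e; apply: ord_inj; have := kzlt p q; have := kzlt q p; rewrite e ltnn; lia.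
have kuinj : injective ku.
  move=> p q e; apply: ord_inj; have := kult p q; have := kult q p; rewrite e ltnn.
  have := xeq p q; rewrite /r /g /blk; repeat case: ifP => ?; lia.
have oe (p q : 'I_N) : (p == q) = (p == q :> nat) by [].
pose S := [set q | g q < 2].
have c1 (t : 'I_N) (T : {set 'I_N}) : t \notin T -> #|t |: T| = #|T|.+1.
  by move=> h; rewrite cardsU1 h.
have za : rk kz a = #|S|.
  apply: eq_card => q; rewrite !inE kzlt /g /blk; repeat case: ifP => ?; lia.
have zb : rk kz b = #|S|.+1.
  rewrite -(c1 a S); last by rewrite inE /g /blk; repeat case: ifP => ?; lia.
  apply: eq_card => q; rewrite !inE oe kzlt /g /blk; repeat case: ifP => ?; lia.
have zc : rk kz c = #|S|.+2.
  rewrite -(c1 a S); last by rewrite inE /g /blk; repeat case: ifP => ?; lia.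
  rewrite -(c1 b (a |: S)); last by rewrite !inE oe /g /blk; repeat case: ifP => ?; lia.
  apply: eq_card => q; rewrite !inE !oe kzlt /g /blk; repeat case: ifP => ?; lia.
have uc : rk ku c = #|S|.
  apply: eq_card => q; rewrite !inE kult /r /g /blk.
  have := xeq q a; have := xeq q b; have := xeq q c; repeat case: ifP => ?; lia.
have ua : rk ku a = #|S|.+1.
  rewrite -(c1 c S); last by rewrite inE /g /blk; repeat case: ifP => ?; lia.
  apply: eq_card => q; rewrite !inE oe kult /r /g /blk.
  have := xeq q a; have := xeq q b; have := xeq q c; repeat case: ifP => ?; lia.
have ub : rk ku b = #|S|.+2.
  rewrite -(c1 c S); last by rewrite inE /g /blk; repeat case: ifP => ?; lia.
  rewrite -(c1 a (c |: S)); last by rewrite !inE oe /g /blk; repeat case: ifP => ?; lia.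
  apply: eq_card => q; rewrite !inE !oe kult /r /g /blk.
  have := xeq q a; have := xeq q b; have := xeq q c; repeat case: ifP => ?; lia.
have ga : g a = 2 /\ r a = x a by rewrite /g /r /blk; repeat case: ifP => ?; lia.
have gb : g b = 2 /\ r b = x b by rewrite /g /r /blk; repeat case: ifP => ?; lia.
have gc : g c = 2 /\ r c = x c by rewrite /g /r /blk; repeat case: ifP => ?; lia.
have gcase (p : 'I_N) : p = a \/ p = b \/ p = c \/
   (g p = 0 /\ r p = p /\ p < a) \/ (g p = 4 /\ r p = p /\ c < p) \/
   (g p = 1 /\ r p = p /\ a < p /\ p < c /\ (p : nat) <> b /\ x p < x a) \/
   (g p = 3 /\ r p = p /\ a < p /\ p < c /\ (p : nat) <> b /\ x a < x p).
  case: (eqVneq p a) => [->|na]; first by left.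
  case: (eqVneq p b) => [->|nb]; first by right; left.
  case: (eqVneq p c) => [->|nc]; first by right; right; left.
  do 3 right.
  have na' : (p : nat) != a := na. have nb' : (p : nat) != b := nb.
  have nc' : (p : nat) != c := nc.
  have := xeq p a; rewrite /g /r /blk (negbTE na') (negbTE nb') (negbTE nc') /=.
  repeat case: ifP => ?; lia.
have F2 (p : 'I_N) : ~~ blk p -> rk kz p = rk ku p.
  move=> hb; apply: eq_card => q; rewrite !inE kzlt kult.
  have hp : g p <> 2 /\ r p = p.
    move: hb; rewrite /r /g /blk => hb; repeat case: ifP => ?; lia.
  case: (gcase q) => [eq|[eq|[eq|hq]]]; try subst q; lia.
have F5 (p q : 'I_N) : p < q -> kz q < kz p -> ku q < ku p.
  move=> hpq; rewrite kzlt kult; lia.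
have F6 (p q : 'I_N) : p < q -> ku q < ku p -> x q < x p.
  move=> hpq; rewrite kult; have hm := hmin p.
  case: (gcase p) => [ep|[ep|[ep|hp]]]; case: (gcase q) => [eq|[eq|[eq|hq]]];
  try subst p; try subst q; lia.
set i := #|S|.
have hi : i.+2 < N by rewrite -zc; apply: rk_lt.
pose z := rkperm kzinj; pose u := rkperm kuinj.
have ez p : nat_of_ord (z p) = rk kz p := rkpermE kzinj p.
have eu p : nat_of_ord (u p) = rk ku p := rkpermE kuinj p.
have uc_e : u c = z a by apply: ord_inj; rewrite ez eu uc za.
have ua_e : u a = z b by apply: ord_inj; rewrite ez eu ua zb.
have ub_e : u b = z c by apply: ord_inj; rewrite ez eu ub zc.
have F4 p : sgen N i (sgen N i.+1 (z p)) = u p.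
  apply: ord_inj; have := Wval (z p) hi; rewrite pcE /= => ->; rewrite ez eu.
  case: (eqVneq p a) => [->|na]; first by rewrite za ua eqxx.
  case: (eqVneq p b) => [->|nb]; first by rewrite zb ub; repeat case: ifP => ?; lia.
  case: (eqVneq p c) => [->|nc]; first by rewrite zc uc; repeat case: ifP => ?; lia.
  have na' : (p : nat) != a := na. have nb' : (p : nat) != b := nb.
  have nc' : (p : nat) != c := nc.
  have hb : ~~ blk p by rewrite /blk (negbTE na') (negbTE nb') (negbTE nc').
  rewrite -(F2 p hb).
  have nz (q : 'I_N) : p != q -> rk kz p != rk kz q.
    move=> h; apply: contra h => /eqP e; apply/eqP; apply: (@perm_inj _ z); apply: ord_inj.
    by rewrite !ez.
  have := nz a na; have := nz b nb; have := nz c nc; rewrite za zb zc.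
  repeat case: ifP => ?; lia.
pose W := Defs.pcomp (sgen N i) (sgen N i.+1).
have eWz : Defs.pcomp W z = u by apply/permP => p; rewrite !pcE F4.
pose y := Defs.pcomp x u^-1%g.
have exu : x = Defs.pcomp y u by rewrite /y /Defs.pcomp mulKVg.
have vza : val (z a) = i by rewrite /= ez za.
have vzb : val (z b) = i.+1 by rewrite /= ez zb.
have vzc : val (z c) = i.+2 by rewrite /= ez zc.
exists i, y, z; split => //.
- by rewrite -/W eWz.
- have hxu : len x = len y + len u.
    rewrite {1}exu lenA // => p q hpq huq.
    rewrite /y !pcE !permK; apply: F6 hpq _.
    by move: huq; rewrite !eu (rkE kuinj).
  have huz : len u = len W + len z.
    rewrite -eWz lenA // => p q hpq hzq.
    rewrite /W !pcE !F4 !eu (rkE kuinj); apply: F5 hpq _.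
    by move: hzq; rewrite !ez (rkE kzinj).
  have hW : len W = 2.
    rewrite /W lenA ?len_sgen //; try lia.
    move=> p q hpq h.
    have : (p, q) \in iset (sgen N i.+1) by rewrite inE /= hpq h.
    rewrite (iset_sgen vzb vzc) inE => /eqP [-> ->].
    by rewrite !F4 !eu uc ub; lia.
  by rewrite hxu huz hW addnA.
- rewrite (rdesc _ vza vzb) (rdesc _ vzb vzc) /y !pcE -uc_e -ua_e -ub_e !permK.
  by rewrite h1 h2.
- rewrite (ldesc _ vza vzb) (ldesc _ vzb vzc) !permK.
  by rewrite hab hbc.
Qed.
End C.

Theorem mainTheorem11 (N : nat) (x : 'S_N) :
  (contains_pattern x [:: 2; 3; 1] <-> unmatched_ascent x) /\
  (contains_pattern x [:: 3; 1; 2] <-> unmatched_descent x).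
Proof.
have main (X : 'S_N) : contains_pattern X [:: 2; 3; 1] -> unmatched_ascent X.
  move=> /pat231 [a [b [c [hab hbc h1 h2]]]].
  have Pb : (fun q : 'I_N => (a < q) && (X a < X q)) b by rewrite /= hab h2.
  case: (@arg_minnP _ b (fun q : 'I_N => (a < q) && (X a < X q)) (fun q : 'I_N => nat_of_ord q) Pb) => b' /andP [hab' h2'] hmin.
  apply: (construct (b := b') hab' _ h1 h2').
  - by apply: leq_ltn_trans hbc; apply: hmin; rewrite hab h2.
  - by move=> q h3 h4; apply: hmin; rewrite h3 h4.
split; split.
- exact: main.
- exact: ua_231.
- move=> /p312_inv /main /ua_inv; by rewrite invgK.
- exact: ud_312.
Qed.
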